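(* Suppose one trial with success probability $p\in(0,1)$ is performed and results in success (i.e. $X=1$ with $X\sim B(1,p)$). Put on $p$ the triangle prior with mode $\alpha\in(0,1)$, $$\pi(p)=\begin{cases}\frac{2}{\alpha}p, & 0<p\le\alpha,\\ \frac{2}{1-\alpha}(1-p), & \alpha<p<1.\end{cases}$$ Then the posterior mean of $p$ is $g(\alpha)=\frac{1+\alpha+\alpha^2}{2(1+\alpha)}$, and the unique $\tau\in(0,1)$ satisfying $\tau=g(\tau)$ (the iterative limit obtained by repeatedly replacing the mode of the prior with the posterior mean) is $\tau=\frac{\sqrt5-1}{2}=1/\phi\approx 0.618$, where $\phi=\frac{1+\sqrt5}{2}$ is the Golden Ratio.
   Context: The posterior mean is the Bayes estimate of $p$ under quadratic loss. *)

(* Defs.v *)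
From Stdlib Require Import Reals Lra.
From Coquelicot Require Import Coquelicot.
Open Scope R_scope.

Definition triangle_prior (alpha p : R) : R :=
  if Rle_dec p 0 then 0
  else if Rle_dec p alpha then (2 / alpha) * p
  else if Rlt_dec p 1 then (2 / (1 - alpha)) * (1 - p)
  else 0.

Definition bernoulli_lik (x : nat) (p : R) : R := p ^ x * (1 - p) ^ (1 - x).

Definition posterior_mean (prior : R -> R) (x : nat) : R :=
  RInt (fun p => p * (bernoulli_lik x p * prior p)) 0 1 /
  RInt (fun p => bernoulli_lik x p * prior p) 0 1.

Definition g (alpha : R) : R := posterior_mean (triangle_prior alpha) 1.

Definition golden_ratio : R := (1 + sqrt 5) / 2.

(* Main.v *)
Require Import Defs.
From Stdlib Require Import Reals Lra.
From Coquelicot Require Import Coquelicot.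
Open Scope R_scope.

Lemma poly_int (f F : R -> R) a b v :
  (forall x, is_derive F x (f x)) -> (forall x, continuous f x) ->
  F b - F a = v -> is_RInt f a b v.
Proof.
  intros HD HC <-. apply (is_RInt_derive F f); intros; auto.
Qed.

Lemma split_int (h f1 f2 : R -> R) al v1 v2 :
  0 < al < 1 ->
  (forall x, 0 < x < al -> h x = f1 x) ->
  (forall x, al < x < 1 -> h x = f2 x) ->
  is_RInt f1 0 al v1 -> is_RInt f2 al 1 v2 ->
  RInt h 0 1 = v1 + v2.
Proof.
  intros Ha H1 H2 I1 I2.
  assert (J1 : is_RInt h 0 al v1).
  { apply is_RInt_ext with f1; auto.
    intros x Hx; rewrite Rmin_left in Hx by lra; rewrite Rmax_right in Hx by lra.
    symmetry; apply H1; lra. }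
  assert (J2 : is_RInt h al 1 v2).
  { apply is_RInt_ext with f2; auto.
    intros x Hx; rewrite Rmin_left in Hx by lra; rewrite Rmax_right in Hx by lra.
    symmetry; apply H2; lra. }
  apply is_RInt_unique. apply (is_RInt_Chasles h 0 al 1); auto.
Qed.

Lemma g_formula alpha : 0 < alpha < 1 ->
  g alpha = (1 + alpha + alpha ^ 2) / (2 * (1 + alpha)).
Proof.
  intros Ha. unfold g, posterior_mean, bernoulli_lik.
  assert (Hp1 : forall x, 0 < x < alpha -> triangle_prior alpha x = 2/alpha * x).
  { intros x Hx; unfold triangle_prior.
    destruct (Rle_dec x 0); [lra|]. destruct (Rle_dec x alpha); lra. }
  assert (Hp2 : forall x, alpha < x < 1 -> triangle_prior alpha x = 2/(1-alpha) * (1-x)).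
  { intros x Hx; unfold triangle_prior.
    destruct (Rle_dec x 0); [lra|]. destruct (Rle_dec x alpha); [lra|].
    destruct (Rlt_dec x 1); lra. }
  rewrite (split_int _ (fun x => 2/alpha * x^3) (fun x => 2/(1-alpha) * (x^2 - x^3)) alpha
     (2/alpha * (alpha^4/4)) (2/(1-alpha) * ((1/3 - 1/4) - (alpha^3/3 - alpha^4/4)))).
  rewrite (split_int _ (fun x => 2/alpha * x^2) (fun x => 2/(1-alpha) * (x - x^2)) alpha
     (2/alpha * (alpha^3/3)) (2/(1-alpha) * ((1/2 - 1/3) - (alpha^2/2 - alpha^3/3)))).
  - field_simplify; try lra.
    +
      assert (H1a : 1 - alpha <> 0) by lra. field; repeat split; nra.
    + nra.
  - exact Ha.
  - intros x Hx; rewrite Hp1 by lra; simpl; ring.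
  - intros x Hx; rewrite Hp2 by lra; simpl; ring.
  - apply poly_int with (F := fun x => 2/alpha * (x^3/3)).
    + intros x; auto_derive; auto; simpl; field; lra.
    + intros x; apply (@ex_derive_continuous R_AbsRing R_NormedModule); auto_derive; auto.
    + field; lra.
  - apply poly_int with (F := fun x => 2/(1-alpha) * (x^2/2 - x^3/3)).
    + intros x; auto_derive; auto; simpl; field; lra.
    + intros x; apply (@ex_derive_continuous R_AbsRing R_NormedModule); auto_derive; auto.
    + field; lra.
  - exact Ha.
  - intros x Hx; rewrite Hp1 by lra; simpl; ring.
  - intros x Hx; rewrite Hp2 by lra; simpl; ring.
  - apply poly_int with (F := fun x => 2/alpha * (x^4/4)).
    + intros x; auto_derive; auto; simpl; field; lra.
    + intros x; apply (@ex_derive_continuous R_AbsRing R_NormedModule); auto_derive; auto.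
    + field; lra.
  - apply poly_int with (F := fun x => 2/(1-alpha) * (x^3/3 - x^4/4)).
    + intros x; auto_derive; auto; simpl; field; lra.
    + intros x; apply (@ex_derive_continuous R_AbsRing R_NormedModule); auto_derive; auto.
    + field; lra.
Qed.

Lemma s5 : sqrt 5 * sqrt 5 = 5 /\ 2 < sqrt 5 < 3.
Proof.
  assert (H := sqrt_sqrt 5 ltac:(lra)).
  assert (H0 := sqrt_pos 5). split; [exact H|]. nra.
Qed.

Lemma fix_iff tau : 0 < tau < 1 -> (tau = g tau <-> tau = (sqrt 5 - 1) / 2).
Proof.
  intros Ht. rewrite g_formula by exact Ht. destruct s5 as [H1 H2].
  split; intros E.
  - assert (Q : tau^2 + tau - 1 = 0).
    { assert (E2 : tau * (2 * (1 + tau)) = 1 + tau + tau ^ 2).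
      { rewrite E at 1. field. lra. }
      simpl in *. nra. }
    simpl in Q. nra.
  - subst tau. unfold Rdiv at 2. apply Rmult_eq_reg_r with (2 * (1 + (sqrt 5 - 1) / 2)); [|lra].
    rewrite Rmult_assoc, (Rmult_comm (/ _)), Rinv_r by lra. simpl. nra.
Qed.

Theorem mainTheorem2 :
  (forall alpha : R, 0 < alpha < 1 ->
     g alpha = (1 + alpha + alpha ^ 2) / (2 * (1 + alpha))) /\
  (exists! tau : R, (0 < tau < 1) /\ tau = g tau) /\
  (forall tau : R, 0 < tau < 1 -> tau = g tau -> tau = (sqrt 5 - 1) / 2) /\
  (sqrt 5 - 1) / 2 = 1 / golden_ratio.
Proof.
  destruct s5 as [H1 H2].
  split; [exact g_formula|]. split; [|split].
  - assert (Hr : 0 < (sqrt 5 - 1)/2 < 1) by lra.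
    exists ((sqrt 5 - 1)/2). split.
    + split; [exact Hr|]. apply fix_iff; auto.
    + intros x [Hx E]. symmetry. apply fix_iff; auto.
  - intros tau Ht E. apply fix_iff; auto.
  - unfold golden_ratio. assert (P : (sqrt 5 - 1) / 2 * ((1 + sqrt 5) / 2) = 1) by nra.
    apply Rmult_eq_reg_r with ((1 + sqrt 5) / 2); [|lra]. rewrite P. field. lra.
Qed.
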